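(* Let $r>0$, $\varepsilon_0>0$, let $n\ge 1$ be an integer, and let $\varphi_0$ be an axially symmetric external potential, harmonic inside the ball of radius $r$ centered at the origin, whose values on the axis are a polynomial of degree $n$: \[ -\varphi_0(s)=\sum_{i=1}^{n+1} b_i s^{i-1}. \] Let $\sigma$ be the polynomial of degree at most $n$ on $[-r,r]$ satisfying \[ \int_{-r}^{r}\frac{r\,\sigma(z)}{\sqrt{s^2+r^2-2sz}}\,dz=-2\varepsilon_0\,\varphi_0(s)\qquad(-r<s<r). \] Then the force acting on the ball, $\mathcal F=\frac{\pi}{\varepsilon_0}\int_{-r}^{r}z\,\sigma(z)^2\,dz$, is \[ \mathcal F=4\pi\varepsilon_0\sum_{i=1}^{n} i\,r^{2i-1}\,b_i\,b_{i+1}. \]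
   Context: Physical setting: a grounded conducting ball of radius $r$ centered at the origin on the axis of an axially symmetric external field with potential $\varphi_0$; $\varepsilon_0$ is the electric constant; $\sigma(z)$ is the induced surface charge density as a function of the axial coordinate $z$. The force expression comes from the electric pressure $p=-\sigma^2/(2\varepsilon_0)$ integrated over the sphere. *)

(* Defs.v *)
From Stdlib Require Import Reals.
From Coquelicot Require Import Coquelicot.
Open Scope R_scope.

Definition peval (c : nat -> R) (d : nat) (x : R) : R :=
  sum_f_R0 (fun k => c k * x ^ k) d.

(* Main.v *)
Require Import Defs.
From Stdlib Require Import Reals Lra Lia Arith.
From Coquelicot Require Import Coquelicot.
Open Scope R_scope.

Lemma cplus (f g : R -> R) x : continuous f x -> continuous g x -> continuous (fun y => f y + g y) x.
Proof. intros; apply (continuous_plus f g); auto. Qed.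
Lemma cmult (f g : R -> R) x : continuous f x -> continuous g x -> continuous (fun y => f y * g y) x.
Proof. intros; apply (continuous_mult f g); auto. Qed.
Lemma cminus (f g : R -> R) x : continuous f x -> continuous g x -> continuous (fun y => f y - g y) x.
Proof. intros; apply (continuous_minus f g); auto. Qed.
Lemma cconst (c x : R) : continuous (fun _ => c) x.
Proof. apply continuous_const. Qed.
Lemma cid (x : R) : continuous (fun y => y) x.
Proof. apply continuous_id. Qed.
Lemma cext (f g : R -> R) x : (forall y, f y = g y) -> continuous f x -> continuous g x.
Proof. intros H. apply continuous_ext; auto. Qed.

Fixpoint LP (l : nat) (x : R) : R :=
  match l with
  | O => 1
  | S l' => match l' with
            | O => x
            | S l'' => ((2 * INR l' + 1) * x * LP l' x - INR l' * LP l'' x) / (INR l' + 1)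
            end
  end.

Fixpoint DP (l : nat) (x : R) : R :=
  match l with
  | O => 0
  | S l' => match l' with
            | O => 1
            | S l'' => ((2 * INR l' + 1) * (LP l' x + x * DP l' x) - INR l' * DP l'' x) / (INR l' + 1)
            end
  end.

Lemma INR_pos1 m : 0 < INR m + 1.
Proof. pose proof (pos_INR m); lra. Qed.

Lemma LP_rec l x : LP (S l) x = ((2 * INR l + 1) * x * LP l x - INR l * LP (pred l) x) / (INR l + 1).
Proof. destruct l; simpl; [field | reflexivity]. Qed.

Lemma LP_xrec l x : x * LP l x = ((INR l + 1) * LP (S l) x + INR l * LP (pred l) x) / (2 * INR l + 1).
Proof. rewrite LP_rec. pose proof (pos_INR l). field. lra. Qed.

Lemma DP_rec m x : DP (S (S m)) x = ((2 * INR (S m) + 1) * (LP (S m) x + x * DP (S m) x) - INR (S m) * DP m x) / (INR (S m) + 1).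
Proof. reflexivity. Qed.

Lemma deriv_comb (f g : R -> R) df dg a b c x : c <> 0 ->
  is_derive f x df -> is_derive g x dg ->
  is_derive (fun y => (a * y * f y - b * g y) / c) x ((a * (f x + x * df) - b * dg) / c).
Proof.
  intros Hc Hf Hg.
  evar (d : R).
  replace ((a * (f x + x * df) - b * dg) / c) with d.
  - unfold d. auto_derive.
    + split; [exists df; exact Hf|split; [exists dg; exact Hg|]]. exact I.
    + replace (Derive (fun x0 => f x0) x) with df by (symmetry; apply is_derive_unique; exact Hf).
      replace (Derive (fun x0 => g x0) x) with dg by (symmetry; apply is_derive_unique; exact Hg). reflexivity.
  - unfold d. field. exact Hc.
Qed.

Lemma LP_deriv2 m : forall x, is_derive (LP m) x (DP m x) /\ is_derive (LP (S m)) x (DP (S m) x).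
Proof.
  induction m as [|m IH]; intro x.
  - split; simpl.
    + apply (is_derive_ext (fun _ => 1)); [reflexivity|]. auto_derive; auto.
    + apply (is_derive_ext (fun y => y)); [reflexivity|]. auto_derive; auto.
  - split; [apply IH|].
    rewrite DP_rec.
    apply is_derive_ext with (fun y => ((2 * INR (S m) + 1) * y * LP (S m) y - INR (S m) * LP m y) / (INR (S m) + 1)).
    { intro; reflexivity. }
    apply deriv_comb.
    + pose proof (INR_pos1 (S m)); lra.
    + apply IH.
    + apply IH.
Qed.

Lemma LP_deriv l x : is_derive (LP l) x (DP l x).
Proof. apply LP_deriv2. Qed.

Lemma LP_cont l x : continuous (LP l) x.
Proof. exact (ex_derive_continuous (LP l) x (ex_intro _ (DP l x) (LP_deriv l x))). Qed.

Lemma DP_cont2 m : forall x, continuous (DP m) x /\ continuous (DP (S m)) x.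
Proof.
  induction m as [|m IH]; intro x.
  - split; simpl; apply cconst.
  - split; [apply IH|].
    apply cext with (fun y => ((2 * INR (S m) + 1) * (LP (S m) y + y * DP (S m) y) - INR (S m) * DP m y) / (INR (S m) + 1)).
    { intro; reflexivity. }
    unfold Rdiv. apply cmult; [|apply cconst].
    apply cminus; apply cmult; try apply cconst.
    + apply cplus; [apply LP_cont|]. apply cmult; [apply cid|apply IH].
    + apply IH.
Qed.

Lemma DP_cont l x : continuous (DP l) x.
Proof. apply DP_cont2. Qed.

Lemma DP_BC m : forall x,
  x * DP (S m) x - DP m x = INR (S m) * LP (S m) x /\
  DP (S m) x - x * DP m x = INR (S m) * LP m x.
Proof.
  induction m as [|m IH]; intro x.
  - simpl. split; lra.
  - destruct (IH x) as [B C].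
    assert (A : DP (S (S m)) x - DP m x = (2 * INR (S m) + 1) * LP (S m) x).
    { rewrite DP_rec. pose proof (INR_pos1 (S m)).
      apply Rmult_eq_reg_r with (INR (S m) + 1); [|lra].
      field_simplify; [|lra]. rewrite S_INR in *. nra. }
    assert (C' : DP (S (S m)) x - x * DP (S m) x = INR (S (S m)) * LP (S m) x).
    { rewrite (S_INR (S m)). lra. }
    split; [|exact C'].
    pose proof (INR_pos1 (S m)).
    rewrite (LP_rec (S m)). simpl pred. rewrite (S_INR (S m)).
    replace ((INR (S m) + 1) * (((2 * INR (S m) + 1) * x * LP (S m) x - INR (S m) * LP m x) / (INR (S m) + 1)))
      with ((2 * INR (S m) + 1) * x * LP (S m) x - INR (S m) * LP m x) by (field; lra).
    assert (x * (DP (S (S m)) x - DP m x) = x * ((2 * INR (S m) + 1) * LP (S m) x)) by (rewrite A; ring).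
    lra.
Qed.

Lemma DP_A m x : DP (S (S m)) x - DP m x = (2 * INR (S m) + 1) * LP (S m) x.
Proof.
  destruct (DP_BC m x) as [B C].
  rewrite DP_rec. pose proof (INR_pos1 (S m)).
  apply Rmult_eq_reg_r with (INR (S m) + 1); [|lra].
  field_simplify; [|lra]. rewrite S_INR in *. nra.
Qed.

Lemma LP_1 l : LP l 1 = 1 /\ LP (S l) 1 = 1.
Proof.
  induction l as [|l IH]; [simpl; lra|]. split; [apply IH|].
  destruct IH as [H0 H1].
  rewrite LP_rec. simpl pred. rewrite H0, H1. pose proof (INR_pos1 (S l)). field. lra.
Qed.

Lemma LP_m1 l : LP l (-1) = (-1)^l /\ LP (S l) (-1) = (-1)^(S l).
Proof.
  induction l as [|l IH]; [simpl; lra|]. split; [apply IH|].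
  destruct IH as [H0 H1].
  rewrite LP_rec. simpl pred. rewrite H0, H1. pose proof (INR_pos1 (S l)).
  change ((-1)^(S (S l))) with (-1 * (-1 * (-1)^l)); change ((-1)^(S l)) with (-1*(-1)^l). field. lra.
Qed.


Definition CI (f : R -> R) := forall x, -1 <= x <= 1 -> continuous f x.
Definition I (f : R -> R) : R := RInt f (-1) 1.

Lemma ex_I f : CI f -> ex_RInt f (-1) 1.
Proof.
  intros H. apply (ex_RInt_continuous (V:=R_CompleteNormedModule)). intros z Hz.
  rewrite Rmin_left, Rmax_right in Hz by lra. apply H; lra.
Qed.

Lemma I_plus f g : CI f -> CI g -> I (fun x => f x + g x) = I f + I g.
Proof. intros Hf Hg. unfold I. exact (RInt_plus f g _ _ (ex_I f Hf) (ex_I g Hg)). Qed.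
Lemma I_minus f g : CI f -> CI g -> I (fun x => f x - g x) = I f - I g.
Proof. intros Hf Hg. unfold I. exact (RInt_minus f g _ _ (ex_I f Hf) (ex_I g Hg)). Qed.
Lemma I_scal f c : CI f -> I (fun x => c * f x) = c * I f.
Proof. intros Hf. unfold I. exact (RInt_scal f _ _ c (ex_I f Hf)). Qed.
Lemma I_ext f g : (forall x, -1 <= x <= 1 -> f x = g x) -> I f = I g.
Proof.
  intros H. unfold I. apply RInt_ext. intros x Hx.
  rewrite Rmin_left, Rmax_right in Hx by lra. apply H; lra.
Qed.

Lemma CI_plus f g : CI f -> CI g -> CI (fun x => f x + g x).
Proof. intros Hf Hg x Hx. apply cplus; auto. Qed.
Lemma CI_minus f g : CI f -> CI g -> CI (fun x => f x - g x).
Proof. intros Hf Hg x Hx. apply cminus; auto. Qed.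
Lemma CI_mult f g : CI f -> CI g -> CI (fun x => f x * g x).
Proof. intros Hf Hg x Hx. apply cmult; auto. Qed.
Lemma CI_const c : CI (fun _ => c).
Proof. intros x _. apply cconst. Qed.
Lemma CI_id : CI (fun x => x).
Proof. intros x _. apply cid. Qed.
Lemma CI_LP l : CI (LP l).
Proof. intros x _. apply LP_cont. Qed.
Lemma CI_DP l : CI (DP l).
Proof. intros x _. apply DP_cont. Qed.
Lemma CI_pow k : CI (fun x => x ^ k).
Proof.
  induction k as [|k IH]; intros x Hx; simpl.
  - apply cconst.
  - apply cmult; [apply cid|apply IH; auto].
Qed.
Lemma CI_sum (g : nat -> R -> R) N : (forall l, CI (g l)) -> CI (fun x => sum_f_R0 (fun l => g l x) N).
Proof.
  intros H. induction N as [|N IH]; simpl.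
  - apply H.
  - apply CI_plus; auto.
Qed.
Lemma CI_ext f g : (forall x, f x = g x) -> CI f -> CI g.
Proof. intros E H x Hx. apply cext with f; auto. Qed.

Lemma I_sum (g : nat -> R -> R) N : (forall l, CI (g l)) ->
  I (fun x => sum_f_R0 (fun l => g l x) N) = sum_f_R0 (fun l => I (g l)) N.
Proof.
  intros H. induction N as [|N IH]; simpl.
  - reflexivity.
  - rewrite I_plus; [|apply CI_sum; auto|auto]. rewrite IH. reflexivity.
Qed.

Lemma IBP f df g dg :
  (forall x, -1 <= x <= 1 -> is_derive f x (df x) /\ is_derive g x (dg x)) ->
  CI df -> CI dg ->
  I (fun x => df x * g x) = f 1 * g 1 - f (-1) * g (-1) - I (fun x => f x * dg x).
Proof.
  intros Hd Cdf Cdg.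
  assert (Cf : CI f).
  { intros x Hx. exact (ex_derive_continuous f x (ex_intro _ (df x) (proj1 (Hd x Hx)))). }
  assert (Cg : CI g).
  { intros x Hx. exact (ex_derive_continuous g x (ex_intro _ (dg x) (proj2 (Hd x Hx)))). }
  assert (H : is_RInt (fun x => df x * g x + f x * dg x) (-1) 1 (f 1 * g 1 - f (-1) * g (-1))).
  { apply (is_RInt_derive (fun x => f x * g x)).
    - intros x Hx. rewrite Rmin_left, Rmax_right in Hx by lra.
      destruct (Hd x Hx) as [H1 H2].
      exact (is_derive_mult f g x _ _ H1 H2 Rmult_comm).
    - intros x Hx. rewrite Rmin_left, Rmax_right in Hx by lra.
      apply cplus; apply cmult; auto. }
  apply (is_RInt_unique (V:=R_CompleteNormedModule)) in H.
  change (I (fun x => df x * g x + f x * dg x) = f 1 * g 1 - f (-1) * g (-1)) in H.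
  rewrite I_plus in H; [| apply CI_mult; auto | apply CI_mult; auto].
  unfold I in *. lra.
Qed.

Lemma is_derive_xpow k x : is_derive (fun y => y ^ k) x (INR k * x ^ pred k).
Proof.
  pose proof (is_derive_pow (fun y => y) k x 1 (is_derive_id x)) as H.
  simpl in H. replace (INR k * x ^ pred k) with (INR k * 1 * x ^ pred k) by ring. exact H.
Qed.

Lemma IBP_mono j k : I (fun x => DP j x * x ^ k) =
  LP j 1 * 1 ^ k - LP j (-1) * (-1) ^ k - INR k * I (fun x => LP j x * x ^ pred k).
Proof.
  rewrite (IBP (LP j) (DP j) (fun y => y ^ k) (fun y => INR k * y ^ pred k)).
  - f_equal. rewrite <- I_scal. apply I_ext. intros; ring.
    apply CI_mult; [apply CI_LP|apply CI_pow].
  - intros x _. split; [apply LP_deriv|apply is_derive_xpow].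
  - apply CI_DP.
  - apply CI_mult; [apply CI_const|apply CI_pow].
Qed.

Lemma DP_A' l x : DP (S l) x - DP (pred l) x = (2 * INR l + 1) * LP l x.
Proof. destruct l; [simpl; lra|]. apply DP_A. Qed.

Lemma LP_1' l : LP l 1 = 1. Proof. apply LP_1. Qed.
Lemma LP_m1' l : LP l (-1) = (-1) ^ l. Proof. apply LP_m1. Qed.

Lemma M_zero k : forall l, (k < l)%nat -> I (fun x => LP l x * x ^ k) = 0.
Proof.
  induction k as [|k IH]; intros l Hl; destruct l as [|m]; try lia.
  - assert (E : (2 * INR (S m) + 1) * I (fun x => LP (S m) x * x ^ 0) = 0).
    { rewrite <- I_scal by (apply CI_mult; [apply CI_LP|apply CI_pow]).
      rewrite (I_ext _ (fun x => DP (S (S m)) x * x ^ 0 - DP m x * x ^ 0)).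
      2:{ intros x _. rewrite <- Rmult_minus_distr_r, (DP_A m x). ring. }
      rewrite I_minus by (apply CI_mult; [apply CI_DP|apply CI_pow]).
      rewrite !IBP_mono. rewrite !LP_1', !LP_m1'. simpl INR. 
      change ((-1) ^ S (S m)) with (-1 * (-1 * (-1)^m)). ring. }
    pose proof (pos_INR (S m)).
    apply Rmult_eq_reg_l with (2 * INR (S m) + 1); [lra|lra].
  - assert (E : (2 * INR (S m) + 1) * I (fun x => LP (S m) x * x ^ S k) = 0).
    { rewrite <- I_scal by (apply CI_mult; [apply CI_LP|apply CI_pow]).
      rewrite (I_ext _ (fun x => DP (S (S m)) x * x ^ S k - DP m x * x ^ S k)).
      2:{ intros x _. rewrite <- Rmult_minus_distr_r, (DP_A m x). ring. }
      rewrite I_minus by (apply CI_mult; [apply CI_DP|apply CI_pow]).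
      rewrite !IBP_mono. rewrite !LP_1', !LP_m1'. simpl pred.
      rewrite (IH (S (S m))) by lia. rewrite (IH m) by lia.
      change ((-1) ^ S (S m)) with (-1 * (-1 * (-1)^m)). ring. }
    pose proof (pos_INR (S m)).
    apply Rmult_eq_reg_l with (2 * INR (S m) + 1); [lra|lra].
Qed.

Ltac ci := repeat match goal with
 | H : CI ?f |- CI ?f => exact H
 | |- CI (fun x => @?f x * @?g x) => apply (CI_mult f g)
 | |- CI (fun x => @?f x + @?g x) => apply (CI_plus f g)
 | |- CI (fun x => @?f x - @?g x) => apply (CI_minus f g)
 | |- CI (fun x => LP _ x) => apply CI_LP
 | |- CI (LP _) => apply CI_LP
 | |- CI (fun x => DP _ x) => apply CI_DP
 | |- CI (DP _) => apply CI_DP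
 | |- CI (fun x => x ^ _) => apply CI_pow
 | |- CI (fun x => x) => apply CI_id
 | |- CI (fun _ => _) => apply CI_const
 end.

Definition Span (B : nat -> R -> R) (d : nat) (f : R -> R) :=
  exists a : nat -> R, forall x, f x = sum_f_R0 (fun k => a k * B k x) d.

Lemma sum_ext_zero (g : nat -> R) d d' : (d <= d')%nat -> (forall k, (d < k <= d')%nat -> g k = 0) ->
  sum_f_R0 g d' = sum_f_R0 g d.
Proof.
  intros Hle H. induction d' as [|d' IH].
  - assert (d = 0)%nat by lia. subst. reflexivity.
  - destruct (Nat.eq_dec d (S d')) as [E|E]; [subst; reflexivity|].
    simpl. rewrite IH by (try lia; intros; apply H; lia). rewrite (H (S d')) by lia. ring.
Qed.

Lemma Span_mono B d d' f : (d <= d')%nat -> Span B d f -> Span B d' f.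
Proof.
  intros Hle [a Ha]. exists (fun k => if le_lt_dec k d then a k else 0). intros x.
  rewrite (sum_ext_zero _ d d'); auto.
  - rewrite Ha. apply sum_eq. intros i Hi. destruct (le_lt_dec i d); [reflexivity|lia].
  - intros k Hk. destruct (le_lt_dec k d); [lia|ring].
Qed.

Lemma Span_plus B d f g : Span B d f -> Span B d g -> Span B d (fun x => f x + g x).
Proof.
  intros [a Ha] [b Hb]. exists (fun k => a k + b k). intros x.
  rewrite Ha, Hb, <- sum_plus. apply sum_eq. intros; ring.
Qed.

Lemma Span_scal B d c f : Span B d f -> Span B d (fun x => c * f x).
Proof.
  intros [a Ha]. exists (fun k => c * a k). intros x.
  rewrite Ha, scal_sum. apply sum_eq. intros; ring.
Qed.

Lemma Span_ext B d f g : (forall x, f x = g x) -> Span B d f -> Span B d g.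
Proof. intros E [a Ha]. exists a. intros x. rewrite <- E. apply Ha. Qed.

Lemma sum_zero (g : nat -> R) d : (forall k, (k <= d)%nat -> g k = 0) -> sum_f_R0 g d = 0.
Proof.
  intros H. induction d as [|d IH]; simpl.
  - apply H; lia.
  - rewrite IH by (intros; apply H; lia). rewrite H by lia. ring.
Qed.

Lemma sum_delta (h : nat -> R) i d : (i <= d)%nat ->
  sum_f_R0 (fun k => (if Nat.eq_dec k i then 1 else 0) * h k) d = h i.
Proof.
  intros Hi. induction d as [|d IH].
  - assert (i = 0)%nat by lia. subst. simpl. destruct (Nat.eq_dec 0 0); [ring|lia].
  - rewrite tech5. destruct (Nat.eq_dec i (S d)) as [E|E].
    + subst. rewrite sum_zero.
      * destruct (Nat.eq_dec (S d) (S d)) as [e|e]; [ring|lia].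
      * intros k Hk. destruct (Nat.eq_dec k (S d)); [lia|ring].
    + rewrite IH by lia. destruct (Nat.eq_dec (S d) i); [lia|ring].
Qed.

Lemma Span_basis B i d : (i <= d)%nat -> Span B d (B i).
Proof.
  intros Hi. exists (fun k => if Nat.eq_dec k i then 1 else 0). intros x.
  rewrite sum_delta; auto.
Qed.

Definition Mono (k : nat) (x : R) := x ^ k.
Definition PD := Span Mono.

Lemma PD_x d f : PD d f -> PD (S d) (fun x => x * f x).
Proof.
  intros [a Ha]. exists (fun k => match k with O => 0 | S k' => a k' end). intros x.
  rewrite decomp_sum by lia. simpl pred. rewrite Ha, scal_sum.
  replace (0 * Mono 0 x) with 0 by ring. rewrite Rplus_0_l.
  apply sum_eq. intros; unfold Mono; simpl; ring.
Qed.

Lemma PD_LP2 m : PD m (LP m) /\ PD (S m) (LP (S m)).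
Proof.
  induction m as [|m [H0 H1]].
  - split.
    + exists (fun _ => 1). intros x. simpl. unfold Mono. simpl. ring.
    + apply (Span_ext _ _ (fun x => x * LP 0 x)). { intros x. simpl. ring. }
      apply PD_x. exists (fun _ => 1). intros x. simpl. unfold Mono. simpl. ring.
  - split; [exact H1|].
    apply (Span_ext _ _ (fun x => (2 * INR (S m) + 1) / (INR (S m) + 1) * (x * LP (S m) x) +
                                  (- INR (S m) / (INR (S m) + 1)) * LP m x)).
    { intros x. rewrite (LP_rec (S m)). simpl pred. pose proof (INR_pos1 (S m)). field. lra. }
    apply Span_plus; apply Span_scal.
    + apply PD_x; auto.
    + apply (Span_mono _ m); auto.
Qed.

Lemma PD_LP m : PD m (LP m).
Proof. apply PD_LP2. Qed.

Lemma orth_PD l d f : (d < l)%nat -> PD d f -> I (fun x => LP l x * f x) = 0.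
Proof.
  intros Hd [a Ha].
  rewrite (I_ext _ (fun x => sum_f_R0 (fun k => a k * (LP l x * x ^ k)) d)).
  2:{ intros x _. rewrite Ha, scal_sum. apply sum_eq. intros; unfold Mono; ring. }
  rewrite I_sum.
  - apply sum_zero. intros k Hk. rewrite I_scal by (apply CI_mult; [apply CI_LP|apply CI_pow]).
    rewrite M_zero by lia. ring.
  - intros k. apply CI_mult; [apply CI_const|apply CI_mult; [apply CI_LP|apply CI_pow]].
Qed.

Lemma orth l m : l <> m -> I (fun x => LP l x * LP m x) = 0.
Proof.
  intros H. destruct (le_lt_dec l m).
  - rewrite (I_ext _ (fun x => LP m x * LP l x)) by (intros; ring).
    apply (orth_PD m l); [lia|apply PD_LP].
  - apply (orth_PD l m); [lia|apply PD_LP].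
Qed.

Lemma norm l : I (fun x => LP l x * LP l x) = 2 / (2 * INR l + 1).
Proof.
  induction l as [|l IH].
  - simpl. unfold I. rewrite RInt_const. unfold scal; simpl; unfold mult; simpl. field.
  - pose proof (pos_INR l).
    rewrite (I_ext _ (fun x => (2 * INR l + 1) / (INR l + 1) * (x * LP (S l) x * LP l x)
                               - INR l / (INR l + 1) * (LP (S l) x * LP (pred l) x))).
    2:{ intros x _. rewrite (LP_rec l x) at 2. field. lra. }
    rewrite I_minus, !I_scal.
    rewrite (orth (S l) (pred l)) by lia.
    rewrite (I_ext _ (fun x => (INR (S l) + 1) / (2 * INR (S l) + 1) * (LP (S (S l)) x * LP l x)
                               + INR (S l) / (2 * INR (S l) + 1) * (LP l x * LP l x))).
    2:{ intros x _. rewrite LP_xrec. simpl pred. rewrite S_INR. field. lra. }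
    rewrite I_plus, !I_scal, (orth (S (S l)) l), IH.
    all: try lia; try (rewrite S_INR; field; repeat split; lra); ci.
Qed.

Definition Qf (t x : R) := 1 - 2 * x * t + t ^ 2.
Definition q (t x : R) := sqrt (Qf t x).
Definition w (t x : R) := / q t x.

Lemma div_eq a b c : c <> 0 -> a / c = b / c -> a = b.
Proof. intros Hc H. apply Rmult_eq_reg_r with (/ c). exact H. apply Rinv_neq_0_compat; auto. Qed.

Section K.
Variable t : R.
Hypothesis Ht : 0 < t < 1.

Lemma Qf_pos x : -1 <= x <= 1 -> 0 < Qf t x.
Proof. intros Hx. unfold Qf. nra. Qed.
Lemma q_pos x : -1 <= x <= 1 -> 0 < q t x.
Proof. intros Hx. unfold q. apply sqrt_lt_R0. apply Qf_pos; auto. Qed.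

Lemma q_deriv x : -1 <= x <= 1 -> is_derive (q t) x (- t * w t x).
Proof.
  intros Hx. unfold w, q.
  assert (HQ : is_derive (Qf t) x (-2 * t)).
  { unfold Qf. auto_derive; auto. ring. }
  pose proof (is_derive_sqrt (Qf t) x _ HQ (Qf_pos x Hx)) as H.
  replace (- t * / sqrt (Qf t x)) with (-2 * t / (2 * sqrt (Qf t x))).
  - exact H.
  - pose proof (q_pos x Hx). unfold q in H0. field. lra.
Qed.

Lemma CI_q : CI (q t).
Proof.
  intros x Hx. exact (ex_derive_continuous (q t) x (ex_intro _ _ (q_deriv x Hx))).
Qed.
Lemma CI_w : CI (w t).
Proof.
  intros x Hx. unfold w. apply (continuous_Rinv_comp (q t)).
  - apply CI_q; auto.
  - pose proof (q_pos x Hx); lra.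
Qed.

Ltac ci2 := repeat match goal with
 | |- CI (fun x => @?f x * @?g x) => apply (CI_mult f g)
 | |- CI (fun x => @?f x + @?g x) => apply (CI_plus f g)
 | |- CI (fun x => @?f x - @?g x) => apply (CI_minus f g)
 | |- CI (fun x => LP _ x) => apply CI_LP
 | |- CI (LP _) => apply CI_LP
 | |- CI (fun x => DP _ x) => apply CI_DP
 | |- CI (DP _) => apply CI_DP
 | |- CI (fun x => w _ x) => apply CI_w
 | |- CI (w _) => apply CI_w
 | |- CI (fun x => q _ x) => apply CI_q
 | |- CI (q _) => apply CI_q
 | |- CI (fun x => x ^ _) => apply CI_pow
 | |- CI (fun x => x) => apply CI_id
 | |- CI (fun _ => _) => apply CI_const
 end.

Lemma q_1 : q t 1 = 1 - t.
Proof. unfold q, Qf. replace (1 - 2 * 1 * t + t ^ 2) with ((1 - t) ^ 2) by ring. apply sqrt_pow2. lra. Qed.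
Lemma q_m1 : q t (-1) = 1 + t.
Proof. unfold q, Qf. replace (1 - 2 * -1 * t + t ^ 2) with ((1 + t) ^ 2) by ring. apply sqrt_pow2. lra. Qed.

Lemma q_Qw x : -1 <= x <= 1 -> q t x = Qf t x * w t x.
Proof.
  intros Hx. unfold w. pose proof (q_pos x Hx).
  assert (E : q t x * q t x = Qf t x) by (unfold q; apply sqrt_sqrt; pose proof (Qf_pos x Hx); lra).
  rewrite <- E. field. lra.
Qed.

Lemma I_w : I (w t) = 2.
Proof.
  assert (H : is_RInt (w t) (-1) 1 (minus ((fun x => - q t x / t) 1) ((fun x => - q t x / t) (-1)))).
  { apply (is_RInt_derive (V:=R_CompleteNormedModule) (fun x => - q t x / t)).
    - intros x Hx. rewrite Rmin_left, Rmax_right in Hx by lra.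
      apply is_derive_ext with (fun y => (-/t) * q t y). { intros y; match goal with |- ?a = ?b => change (@eq R a b) end; field; lra. }
      replace (w t x) with ((-/t) * (- t * w t x)) by (field; lra).
      apply (is_derive_scal (q t) x (-/t)). apply q_deriv; auto.
    - intros x Hx. rewrite Rmin_left, Rmax_right in Hx by lra. apply CI_w; auto. }
  apply (is_RInt_unique (V:=R_CompleteNormedModule)) in H. unfold I. rewrite H.
  unfold minus, plus, opp; simpl. rewrite q_1, q_m1. field. lra.
Qed.

Definition J l := I (fun x => LP l x * w t x).
Definition L l := I (fun x => LP l x * q t x).

Lemma J0 : J 0 = 2.
Proof. unfold J. rewrite <- I_w. apply I_ext. intros; simpl; ring. Qed.

Lemma IBP_q j : I (fun x => DP j x * q t x) = LP j 1 * (1 - t) - LP j (-1) * (1 + t) + t * J j.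
Proof.
  rewrite (IBP (LP j) (DP j) (q t) (fun x => - t * w t x)).
  - rewrite q_1, q_m1. unfold J.
    rewrite (I_ext _ (fun x => (-t) * (LP j x * w t x))) by (intros; ring).
    rewrite I_scal by (apply CI_mult; [apply CI_LP|apply CI_w]). ring.
  - intros x Hx. split; [apply LP_deriv|apply q_deriv; auto].
  - apply CI_DP.
  - apply CI_mult; [apply CI_const|apply CI_w].
Qed.

Lemma L_eq1 l : L l = (1 + t ^ 2) * J l - 2 * t * I (fun x => x * LP l x * w t x).
Proof.
  unfold L, J.
  rewrite (I_ext _ (fun x => (1 + t ^ 2) * (LP l x * w t x) - (2 * t) * (x * LP l x * w t x))).
  - rewrite I_minus, !I_scal. reflexivity.
    all: ci2.
  - intros x Hx. rewrite q_Qw by auto. unfold Qf. ring.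
Qed.

Lemma xJ l : I (fun x => x * LP l x * w t x) = ((INR l + 1) * J (S l) + INR l * J (pred l)) / (2 * INR l + 1).
Proof.
  pose proof (pos_INR l).
  unfold J.
  rewrite (I_ext _ (fun x => (INR l + 1) / (2 * INR l + 1) * (LP (S l) x * w t x) + INR l / (2 * INR l + 1) * (LP (pred l) x * w t x))).
  - rewrite I_plus, !I_scal. field. lra. all: ci2.
  - intros x Hx. rewrite LP_xrec. field. lra.
Qed.

Lemma L_eq2 l : (2 * INR l + 1) * L l =
  (LP (S l) 1 * (1 - t) - LP (S l) (-1) * (1 + t) + t * J (S l)) -
  (LP (pred l) 1 * (1 - t) - LP (pred l) (-1) * (1 + t) + t * J (pred l)).
Proof.
  rewrite <- !IBP_q. unfold L. rewrite <- I_scal by ci2. rewrite <- I_minus by ci2.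
  apply I_ext. intros x _. rewrite <- Rmult_minus_distr_r, DP_A'. ring.
Qed.

Lemma Jrel l : (2 * INR l + 1) * ((1 + t ^ 2) * J l) - 2 * t * ((INR l + 1) * J (S l) + INR l * J (pred l)) =
  (1 + t) * ((-1) ^ (pred l) + (-1) ^ l) + t * (J (S l) - J (pred l)).
Proof.
  pose proof (L_eq2 l) as H. rewrite L_eq1, xJ in H. rewrite !LP_1', !LP_m1' in H.
  pose proof (pos_INR l).
  replace ((2 * INR l + 1) * ((1 + t ^ 2) * J l - 2 * t * (((INR l + 1) * J (S l) + INR l * J (pred l)) / (2 * INR l + 1))))
    with ((2 * INR l + 1) * ((1 + t ^ 2) * J l) - 2 * t * ((INR l + 1) * J (S l) + INR l * J (pred l))) in H by (field; lra).
  rewrite H. change ((-1) ^ S l) with (-1 * (-1) ^ l). ring.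
Qed.

Lemma Jform2 m : J m = 2 * t ^ m / (2 * INR m + 1) /\ J (S m) = 2 * t ^ (S m) / (2 * INR (S m) + 1).
Proof.
  assert (K : forall a b c d : R, c = d -> a - b = -(c - d) -> a = b) by (intros; lra).
  induction m as [|m [H0 H1]].
  - assert (E0 : J 0 = 2) by apply J0.
    pose proof (Jrel 0) as H. simpl pred in H. rewrite E0 in H.
    assert (E : 3 * t * J 1 = 2 * t ^ 2).
    { match type of H with ?c = ?d => apply (K _ _ c d H) end. cbn [INR pow]. ring. }
    split; [rewrite E0; cbn [INR pow]; field|].
    apply Rmult_eq_reg_l with (3 * t); [|lra]. rewrite E. cbn [INR pow]. field.
  - split; [exact H1|].
    pose proof (Jrel (S m)) as H. simpl pred in H.
    change ((-1) ^ S m) with (-1 * (-1) ^ m) in H.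
    assert (E : t * (2 * INR (S m) + 3) * J (S (S m)) = (2 * INR (S m) + 1) * (1 + t ^ 2) * J (S m) - t * (2 * INR m + 1) * J m).
    { match type of H with ?c = ?d => apply (K _ _ c d H) end. rewrite S_INR. ring. }
    rewrite H0, H1 in E. pose proof (pos_INR m).
    apply Rmult_eq_reg_l with (t * (2 * INR (S m) + 3)); [|rewrite S_INR; apply Rgt_not_eq; apply Rmult_lt_0_compat; lra].
    rewrite E. rewrite !S_INR. cbn [pow]. field. lra.
Qed.

Lemma Jform l : J l = 2 * t ^ l / (2 * INR l + 1).
Proof. exact (proj1 (Jform2 l)). Qed.
End K.

Lemma Span_sum B d (g : nat -> R -> R) N : (forall k, (k <= N)%nat -> Span B d (g k)) ->
  Span B d (fun x => sum_f_R0 (fun k => g k x) N).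
Proof.
  intros H. induction N as [|N IH].
  - apply H; lia.
  - apply (Span_ext _ _ (fun x => sum_f_R0 (fun k => g k x) N + g (S N) x)).
    { intros; reflexivity. }
    apply Span_plus; [apply IH; intros; apply H; lia|apply H; lia].
Qed.

Definition LS := Span LP.

Lemma LS_xLP k d : (S k <= d)%nat -> LS d (fun x => x * LP k x).
Proof.
  intros Hk. pose proof (pos_INR k).
  apply (Span_ext _ _ (fun x => (INR k + 1) / (2 * INR k + 1) * LP (S k) x + INR k / (2 * INR k + 1) * LP (pred k) x)).
  { intros x. rewrite LP_xrec. field. lra. }
  apply Span_plus; apply Span_scal; apply Span_basis; lia.
Qed.

Lemma LS_x d f : LS d f -> LS (S d) (fun x => x * f x).
Proof.
  intros [a Ha].
  apply (Span_ext _ _ (fun x => sum_f_R0 (fun k => a k * (x * LP k x)) d)).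
  { intros x. rewrite Ha, scal_sum. apply sum_eq. intros; ring. }
  apply Span_sum. intros k Hk. apply Span_scal. apply LS_xLP. lia.
Qed.

Lemma LS_mono k : LS k (fun x => x ^ k).
Proof.
  induction k as [|k IH].
  - apply (Span_ext _ _ (LP 0)). { intros; simpl; reflexivity. } apply Span_basis; lia.
  - apply (Span_ext _ _ (fun x => x * x ^ k)). { intros; simpl; reflexivity. }
    apply LS_x; auto.
Qed.

Lemma LS_poly (c : nat -> R) n : LS n (fun x => sum_f_R0 (fun k => c k * x ^ k) n).
Proof.
  apply Span_sum. intros k Hk. apply Span_scal. apply (Span_mono _ k); [lia|apply LS_mono].
Qed.

Lemma pow_le1 s k : 0 <= s <= 1 -> 0 <= s ^ k <= 1.
Proof.
  intros Hs. induction k as [|k IH]; simpl; [lra|]. split; [nra|nra].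
Qed.

Lemma sum_bound (c : nat -> R) N s : 0 <= s <= 1 ->
  Rabs (sum_f_R0 (fun k => c k * s ^ k) N) <= sum_f_R0 (fun k => Rabs (c k)) N.
Proof.
  intros Hs. induction N as [|N IH].
  - simpl. rewrite Rmult_1_r. lra.
  - rewrite !tech5. eapply Rle_trans; [apply Rabs_triang|]. apply Rplus_le_compat; auto.
    rewrite Rabs_mult. rewrite <- (Rmult_1_r (Rabs (c (S N)))) at 2.
    apply Rmult_le_compat_l; [apply Rabs_pos|].
    pose proof (pow_le1 s (S N) Hs).
    rewrite Rabs_right; lra.
Qed.

Lemma poly_zero N : forall (c : nat -> R) d, 0 < d ->
  (forall s, 0 < s < d -> sum_f_R0 (fun k => c k * s ^ k) N = 0) ->
  forall k, (k <= N)%nat -> c k = 0.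
Proof.
  induction N as [|N IH]; intros c d Hd H k Hk.
  - assert (k = 0)%nat by lia. subst. specialize (H (d/2) ltac:(lra)). simpl in H. lra.
  - assert (E : forall s, sum_f_R0 (fun k => c k * s ^ k) (S N) = c 0%nat + s * sum_f_R0 (fun k => c (S k) * s ^ k) N).
    { intros s. rewrite decomp_sum by lia. simpl pred. rewrite scal_sum. f_equal; [simpl; ring|].
      apply sum_eq; intros; simpl; ring. }
    assert (C0 : c 0%nat = 0).
    { set (K := sum_f_R0 (fun k => Rabs (c (S k))) N).
      assert (HK : 0 <= K).
      { unfold K. clear. induction N; simpl; [apply Rabs_pos|]. pose proof (Rabs_pos (c (S (S N)))); lra. }
      destruct (Req_dec (c 0%nat) 0) as [e|ne]; auto. exfalso.
      pose proof (Rabs_pos_lt _ ne) as Hc.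
      set (s := Rmin (Rmin (d/2) (1/2)) (Rabs (c 0%nat) / (2 * (K + 1)))).
      assert (Hs1 : 0 < s).
      { unfold s. repeat apply Rmin_pos; try lra. apply Rdiv_lt_0_compat; lra. }
      assert (Hs2 : s <= d/2) by (unfold s; eapply Rle_trans; [apply Rmin_l|apply Rmin_l]).
      assert (Hs3 : s <= 1/2) by (unfold s; eapply Rle_trans; [apply Rmin_l|apply Rmin_r]).
      assert (Hs4 : s <= Rabs (c 0%nat) / (2 * (K + 1))) by (unfold s; apply Rmin_r).
      specialize (H s ltac:(lra)). rewrite E in H.
      pose proof (sum_bound (fun k => c (S k)) N s ltac:(lra)) as B. cbv beta in B. fold K in B.
      assert (Rabs (c 0%nat) = Rabs (s * sum_f_R0 (fun k => c (S k) * s ^ k) N)).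
      { replace (c 0%nat) with (- (s * sum_f_R0 (fun k => c (S k) * s ^ k) N)) by lra. apply Rabs_Ropp. }
      rewrite Rabs_mult, (Rabs_right s) in H0 by lra.
      assert (s * Rabs (sum_f_R0 (fun k => c (S k) * s ^ k) N) <= s * K) by (apply Rmult_le_compat_l; lra).
      assert (s * K <= Rabs (c 0%nat) / (2 * (K + 1)) * K) by (apply Rmult_le_compat_r; lra).
      assert (Rabs (c 0%nat) / (2 * (K + 1)) * K < Rabs (c 0%nat)).
      { unfold Rdiv. replace (Rabs (c 0%nat) * / (2 * (K + 1)) * K) with (Rabs (c 0%nat) * (K * / (2 * (K + 1)))) by ring.
        rewrite <- (Rmult_1_r (Rabs (c 0%nat))) at 2. apply Rmult_lt_compat_l; auto.
        apply (Rmult_lt_reg_r (2 * (K + 1))); [lra|]. rewrite Rmult_assoc, Rinv_l by lra. lra. }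
      lra. }
    destruct k as [|k]; auto.
    apply (IH (fun k => c (S k)) d Hd); [|lia].
    intros s Hs. specialize (H s Hs). rewrite E, C0 in H.
    apply Rmult_eq_reg_l with s; [|lra]. lra.
Qed.

Lemma change_var (r : R) (h G : R -> R) : 0 < r -> CI G ->
  (forall z, -r < z < r -> h z = G (z / r) / r) ->
  RInt h (-r) r = I G.
Proof.
  intros Hr CG H.
  assert (E1 : / r * - r + 0 = -1) by (field; lra).
  assert (E2 : / r * r + 0 = 1) by (field; lra).
  assert (HG : ex_RInt G (/ r * - r + 0) (/ r * r + 0)) by (rewrite E1, E2; apply ex_I; auto).
  pose proof (RInt_comp_lin G (/ r) 0 (-r) r HG) as C.
  rewrite E1, E2 in C. unfold I. rewrite <- C.
  apply RInt_ext. intros x Hx. rewrite Rmin_left, Rmax_right in Hx by lra.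
  rewrite H by lra. unfold scal; simpl; unfold mult; simpl.
  replace (/ r * x + 0) with (x / r) by (field; lra). field. lra.
Qed.

Definition Aco (a : nat -> R) n j := if le_lt_dec j n then a j * (2 / (2 * INR j + 1)) else 0.

Lemma proj (a : nat -> R) n j :
  I (fun y => LP j y * sum_f_R0 (fun k => a k * LP k y) n) = Aco a n j.
Proof.
  rewrite (I_ext _ (fun y => sum_f_R0 (fun k => a k * (LP j y * LP k y)) n)).
  2:{ intros y _. rewrite scal_sum. apply sum_eq. intros; ring. }
  rewrite I_sum by (intros; ci).
  rewrite (sum_eq _ (fun k => (if Nat.eq_dec k j then 1 else 0) * (a k * (2 / (2 * INR k + 1))))).
  - unfold Aco. destruct (le_lt_dec j n).
    + apply sum_delta; auto.
    + apply sum_zero. intros k Hk. destruct (Nat.eq_dec k j); [lia|ring].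
  - intros k Hk. rewrite I_scal by ci. destruct (Nat.eq_dec k j).
    + subst. rewrite norm. ring.
    + rewrite orth by auto. ring.
Qed.

Lemma force_sum (a : nat -> R) n :
  I (fun y => y * sum_f_R0 (fun k => a k * LP k y) n * sum_f_R0 (fun k => a k * LP k y) n) =
  sum_f_R0 (fun l => a l * (((INR l + 1) * Aco a n (S l) + INR l * Aco a n (pred l)) / (2 * INR l + 1))) n.
Proof.
  set (g := fun y => sum_f_R0 (fun k => a k * LP k y) n).
  assert (Cg : CI g) by (unfold g; apply CI_sum; intros; ci).
  rewrite (I_ext _ (fun y => sum_f_R0 (fun l => a l * (y * LP l y * g y)) n)).
  2:{ intros y _.
      replace (sum_f_R0 (fun l => a l * (y * LP l y * g y)) n) with (sum_f_R0 (fun l => a l * LP l y) n * (y * g y)).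
      - unfold g. ring.
      - rewrite Rmult_comm, scal_sum. apply sum_eq. intros; ring. }
  rewrite I_sum.
  2:{ intros l. ci. }
  apply sum_eq. intros l Hl. rewrite I_scal.
  2:{ ci. }
  f_equal. pose proof (pos_INR l).
  rewrite (I_ext _ (fun y => (INR l + 1) / (2 * INR l + 1) * (LP (S l) y * g y) + INR l / (2 * INR l + 1) * (LP (pred l) y * g y))).
  2:{ intros y _. rewrite LP_xrec. field. lra. }
  rewrite I_plus, !I_scal.
  - unfold g. rewrite !proj. field. lra.
  all: ci.
Qed.

Lemma final_alg (a b : nat -> R) (r eps0 PI : R) n' : 0 < r -> 0 < eps0 ->
  (forall l, (l <= S n')%nat -> a l = eps0 * (2 * INR l + 1) * b (S l) * r ^ l / r) ->
  PI / eps0 * (r ^ 2 * sum_f_R0 (fun l => a l * (((INR l + 1) * Aco a (S n') (S l) + INR l * Aco a (S n') (pred l)) / (2 * INR l + 1))) (S n'))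
  = 4 * PI * eps0 * sum_f_R0 (fun k => INR (S k) * r ^ (2 * k + 1) * b (S k) * b (S (S k))) n'.
Proof.
  intros Hr He Ha.
  set (U := fun l => a l * (INR l + 1) * Aco a (S n') (S l) / (2 * INR l + 1)).
  set (V := fun l => a l * INR l * Aco a (S n') (pred l) / (2 * INR l + 1)).
  rewrite (sum_eq _ (fun l => U l + V l)).
  2:{ intros l _. unfold U, V. pose proof (pos_INR l). field. lra. }
  rewrite sum_plus.
  rewrite tech5. rewrite (decomp_sum V (S n')) by lia. simpl pred.
  assert (U0 : U (S n') = 0).
  { unfold U, Aco. destruct (le_lt_dec (S (S n')) (S n')); [lia|]. field. pose proof (pos_INR (S n')); lra. }
  assert (V0 : V 0%nat = 0).
  { unfold V. simpl INR. field. }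
  rewrite U0, V0.
  rewrite (sum_eq (fun i => V (S i)) U).
  2:{ intros l Hl. unfold U, V, Aco. simpl pred.
      destruct (le_lt_dec (S l) (S n')); [|lia]. destruct (le_lt_dec l (S n')); [|lia].
      rewrite S_INR. pose proof (pos_INR l). field. lra. }
  rewrite (sum_eq U (fun k => (INR (S k) * r ^ (2 * k + 1) * b (S k) * b (S (S k))) * (2 * eps0 ^ 2 / r ^ 2))).
  2:{ intros l Hl. unfold U, Aco. destruct (le_lt_dec (S l) (S n')); [|lia].
      rewrite (Ha l) by lia. rewrite (Ha (S l)) by lia.
      replace (2 * l + 1)%nat with (l + S l)%nat by lia. rewrite pow_add.
      rewrite !S_INR. pose proof (pos_INR l). field. lra. }
  rewrite <- scal_sum. field. lra.
Qed.

Lemma sqrt_scale r s z : 0 < r -> -r <= z <= r -> 0 < s < r ->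
  sqrt (s ^ 2 + r ^ 2 - 2 * s * z) = r * q (s / r) (z / r).
Proof.
  intros Hr Hz Hs. unfold q.
  assert (Ht : 0 < s / r < 1).
  { split; [apply Rdiv_lt_0_compat; lra|]. apply (Rmult_lt_reg_r r); [lra|]. field_simplify; lra. }
  assert (Hy : -1 <= z / r <= 1).
  { split; [apply (Rmult_le_reg_r r); [lra|]; field_simplify; lra|].
    apply (Rmult_le_reg_r r); [lra|]; field_simplify; lra. }
  pose proof (Qf_pos (s / r) Ht (z / r) Hy).
  replace (s ^ 2 + r ^ 2 - 2 * s * z) with (r ^ 2 * Qf (s / r) (z / r)) by (unfold Qf; field; lra).
  rewrite sqrt_mult by (try apply pow2_ge_0; lra). rewrite sqrt_pow2 by lra. reflexivity.
Qed.

Theorem theorem3 (r eps0 : R) (n : nat) (b : nat -> R) (phi0 sigma : R -> R) :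
  0 < r -> 0 < eps0 -> (1 <= n)%nat ->
  b (S n) <> 0 ->
  (forall s, - phi0 s = sum_f_R0 (fun k => b (S k) * s ^ k) n) ->
  (exists c : nat -> R, forall z, -r <= z <= r -> sigma z = peval c n z) ->
  (forall s, -r < s < r ->
     RInt (fun z => r * sigma z / sqrt (s ^ 2 + r ^ 2 - 2 * s * z)) (-r) r
     = - 2 * eps0 * phi0 s) ->
  PI / eps0 * RInt (fun z => z * sigma z ^ 2) (-r) r
  = 4 * PI * eps0 *
    sum_f_R0 (fun k => INR (S k) * r ^ (2 * k + 1) * b (S k) * b (S (S k))) (n - 1).
Proof.
  intros Hr He Hn Hb Hphi [c Hc] Heq.
  destruct (LS_poly (fun k => c k * r ^ k) n) as [a Ha].
  set (g := fun y => sum_f_R0 (fun k => a k * LP k y) n).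
  assert (Hg : forall z, -r <= z <= r -> sigma z = g (z / r)).
  { intros z Hz. rewrite Hc by auto. unfold g. rewrite <- Ha. unfold peval. apply sum_eq. intros k _.
    unfold Rdiv. rewrite Rpow_mult_distr, pow_inv. field. apply pow_nonzero. lra. }
  assert (CIg : CI g) by (unfold g; apply CI_sum; intros; ci).
  assert (Hcoef : forall l, (l <= n)%nat -> a l = eps0 * (2 * INR l + 1) * b (S l) * r ^ l / r).
  { assert (Z : forall l, (l <= n)%nat -> r * a l * (2 / (2 * INR l + 1)) * (/ r) ^ l - 2 * eps0 * b (S l) = 0).
    { apply (poly_zero n _ r Hr). intros s Hs.
      set (t := s / r).
      assert (Ht : 0 < t < 1).
      { unfold t. split; [apply Rdiv_lt_0_compat; lra|]. apply (Rmult_lt_reg_r r); [lra|]. field_simplify; lra. }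
      assert (E1 : RInt (fun z => r * sigma z / sqrt (s ^ 2 + r ^ 2 - 2 * s * z)) (-r) r
                   = I (fun y => r * g y * w t y)).
      { apply change_var; auto.
        - apply CI_mult; [apply CI_mult; [apply CI_const|auto]|apply (CI_w t Ht)].
        - intros z Hz. rewrite Hg by lra. rewrite sqrt_scale by lra. fold t. unfold w.
          pose proof (q_pos t Ht (z / r)) as Hq.
          assert (Hy : -1 <= z / r <= 1).
          { split; [apply (Rmult_le_reg_r r); [lra|]; field_simplify; lra|].
            apply (Rmult_le_reg_r r); [lra|]; field_simplify; lra. }
          specialize (Hq Hy). field. lra. }
      assert (E2 : I (fun y => r * g y * w t y) = r * sum_f_R0 (fun l => a l * J t l) n).
      { rewrite (I_ext _ (fun y => sum_f_R0 (fun l => (r * a l) * (LP l y * w t y)) n)).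
        - rewrite I_sum.
          + rewrite scal_sum. apply sum_eq. intros l _. rewrite I_scal.
            * unfold J. ring.
            * apply CI_mult; [apply CI_LP|apply (CI_w t Ht)].
          + intros l. apply CI_mult; [apply CI_const|apply CI_mult; [apply CI_LP|apply (CI_w t Ht)]].
        - intros y _. unfold g. transitivity ((r * w t y) * sum_f_R0 (fun k => a k * LP k y) n); [ring|].
          rewrite scal_sum. apply sum_eq. intros; ring. }
      specialize (Heq s ltac:(lra)). rewrite E1, E2 in Heq.
      assert (Hp := Hphi s).
      rewrite (sum_eq _ (fun l => (a l * J t l) * r + (b (S l) * s ^ l) * (-2 * eps0))).
      - rewrite sum_plus, <- !scal_sum, <- Hp. lra.
      - intros l _. rewrite Jform by auto. unfold t, Rdiv. rewrite Rpow_mult_distr. field. idtac.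
        pose proof (pos_INR l). lra. }
    intros l Hl. specialize (Z l Hl). rewrite pow_inv in Z.
    assert (rl : 0 < r ^ l) by (apply pow_lt; lra). pose proof (pos_INR l).
    assert (Z' : r * a l * (2 / (2 * INR l + 1)) * / r ^ l = 2 * eps0 * b (S l)) by lra.
    replace (a l) with ((r * a l * (2 / (2 * INR l + 1)) * / r ^ l) * ((2 * INR l + 1) * r ^ l / (2 * r)))
      by (field; repeat split; lra).
    rewrite Z'. field. lra. }
  assert (F1 : RInt (fun z => z * sigma z ^ 2) (-r) r = I (fun y => r * (r * y) * (g y * g y))).
  { apply change_var; auto.
    - ci.
    - intros z Hz. rewrite Hg by lra. field. lra. }
  assert (F2 : I (fun y => r * (r * y) * (g y * g y)) = r ^ 2 * I (fun y => y * g y * g y)).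
  { rewrite <- I_scal by ci. apply I_ext. intros; ring. }
  rewrite F1, F2. unfold g. rewrite force_sum.
  destruct n as [|n']; [lia|]. replace (S n' - 1)%nat with n' by lia.
  apply final_alg; auto.
Qed.
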